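(* Let $p\ge5$, $S$ a Sylow $p$-subgroup of $SU_4(p)$, and $\mathcal{F}$ a saturated fusion system on $S$. If $H\le S$ is nonabelian of order $p^4$ and $\mathcal{F}$-essential, then $H\cong p^{1+2}_+\times C_p$.
   Context: $p^{1+2}_+$ denotes the extraspecial group of order $p^3$ and exponent $p$. $H\le S$ is $\mathcal{F}$-essential if it is $\mathcal{F}$-centric, fully $\mathcal{F}$-normalized, and $\mathrm{Out}_{\mathcal{F}}(H)$ has a strongly $p$-embedded subgroup. *)

(* Defs.v *)
From HB Require Import structures.
From mathcomp Require Import all_boot all_order all_algebra all_fingroup all_solvable all_field.
Set Implicit Arguments. Unset Strict Implicit. Unset Printing Implicit Defensive.
Import GRing.Theory.

Local Open Scope group_scope.

Section Fusion.
Variable gT : finGroupType.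
Implicit Types (S P Q R : {set gT}) (f g : {ffun gT -> gT}).

(* A fusion system on S: F P Q is the set Hom_F(P,Q) of F-morphisms.        *)
(* Morphisms are represented by functions gT -> gT; only their restriction  *)
(* to the domain P matters (axiom fs_ext).                                  *)
Record fusion_system S (F : {set gT} -> {set gT} -> {set {ffun gT -> gT}}) : Prop := {
  fs_hom : forall P Q f, f \in F P Q ->
    [/\ group_set P, group_set Q, P \subset S, Q \subset S &
        [/\ morphic P f, {in P &, injective f} & f @: P \subset Q]];
  fs_ext : forall P Q f g, f \in F P Q -> {in P, f =1 g} -> g \in F P Q;
  fs_conj : forall P Q s, group_set P -> group_set Q -> P \subset S -> Q \subset S ->
    s \in S -> P :^ s \subset Q -> [ffun x => x ^ s] \in F P Q;
  fs_res : forall P Q P' Q' f, f \in F P Q -> group_set P' -> group_set Q' ->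
    P' \subset P -> Q' \subset S -> f @: P' \subset Q' -> f \in F P' Q';
  fs_comp : forall P Q R f g, f \in F P Q -> g \in F Q R ->
    [ffun x => g (f x)] \in F P R;
  fs_inv : forall P Q f, f \in F P Q ->
    exists2 g, g \in F (f @: P) P & {in P, forall x, g (f x) = x}
}.

Variables (S : {set gT}) (F : {set gT} -> {set gT} -> {set {ffun gT -> gT}}).

Definition Fconj P Q := exists2 f, f \in F P S & f @: P = Q.

Definition AutF P : {set {perm gT}} := [set a in Aut P | [ffun x => a x] \in F P P].
Definition AutS P : {set {perm gT}} :=
  [set a in Aut P | [exists s in 'N_S(P), [forall x in P, a x == x ^ s]]].
Definition Inn P : {set {perm gT}} :=
  [set a in Aut P | [exists s in P, [forall x in P, a x == x ^ s]]].
Definition OutF P := (AutF P / Inn P)%g.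

Definition fully_normalized P := forall Q, Fconj P Q -> #|'N_S(Q)| <= #|'N_S(P)|.
Definition fully_centralized P := forall Q, Fconj P Q -> #|'C_S(Q)| <= #|'C_S(P)|.
Definition Fcentric P := forall Q, Fconj P Q -> 'C_S(Q) \subset Q.

Definition Nphi P f : {set gT} :=
  [set g in 'N_S(P) | [exists h in 'N_S(f @: P), [forall x in P, f (x ^ g) == f x ^ h]]].

(* saturation, in the sense of Aschbacher--Kessar--Oliver, Def. I.2.2 *)
Definition saturated (p : nat) :=
  fusion_system S F /\
  (forall P, group_set P -> P \subset S -> fully_normalized P ->
     fully_centralized P /\ pHall p (AutF P) (AutS P)) /\
  (forall P f, group_set P -> P \subset S -> f \in F P S ->
     fully_centralized (f @: P) ->
     exists2 g, g \in F (Nphi P f) S & {in P, f =1 g}).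
End Fusion.

Definition strongly_p_embedded (T : finGroupType) (p : nat) (G : {set T}) (M : {group T}) :=
  [/\ M \proper G, p %| #|M| &
      forall x, x \in G :\: M -> ~~ (p %| #|M :&: M :^ x|)].

Definition Fessential (gT : finGroupType) (p : nat) (S : {set gT})
  (F : {set gT} -> {set gT} -> {set {ffun gT -> gT}}) (H : {set gT}) :=
  [/\ Fcentric S F H, fully_normalized S F H &
      exists M : {group coset_of (Inn H)}, strongly_p_embedded p (OutF F H) M].

(* The special unitary group SU_n(q) in GL_n(K), |K| = q^2, w.r.t. the   *)
(* standard Hermitian form; conjugation is x |-> x^q.                     *)
Definition SU (n q : nat) (K : finFieldType) : {set {'GL_n.+1[K]}} :=
  [set g : {'GL_n.+1[K]} | (\det (val g) == 1)%R &&
     ((map_mx (fun x : K => x ^+ q)%R (val g))^T *m val g == 1%:M)%R].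

(* Main.v *)
Require Import Defs.
From mathcomp Require Import all_boot all_order all_algebra all_fingroup all_solvable all_field.
From mathcomp Require Import zify.
Set Implicit Arguments. Unset Strict Implicit. Unset Printing Implicit Defensive.
Module ExpoM.
Import GRing.Theory.
Local Open Scope ring_scope.


Section Expo.
Variables (K : fieldType) (p : nat).
Hypothesis pK : p \in [pchar K].
Hypothesis p_odd : odd p.

Lemma polyXsub1_frob k : ('X - 1 : {poly K}) ^+ (p ^ k) = 'X^(p ^ k) - 1.
Proof.
have pP : p \in [pchar {poly K}] by rewrite pchar_poly.
have pr := pcharf_prime pK.
rewrite exprDn_pchar; last first.
  by rewrite (eq_pnat _ (pcharf_eq pP)) pnatX pnat_id.
by rewrite -signr_odd oddX p_odd orbT expr1.
Qed.

Lemma mx_frob n (M : 'M[K]_n.+1) k : (M - 1) ^+ (p ^ k) = M ^+ (p ^ k) - 1.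
Proof.
have := congr1 (horner_mx M) (polyXsub1_frob k).
by rewrite !rmorphXn !rmorphB /= horner_mx_X rmorph1 rmorphXn /= horner_mx_X.
Qed.

Lemma nilmx (N : 'M[K]_4) m : N ^+ m = 0 -> N ^+ 4 = 0.
Proof.
move=> Nm.
have h1 : mxminpoly N %| ('X - 0%:P) ^+ m.
  by apply/mxminpoly_minP; rewrite subr0 rmorphXn /= horner_mx_X.
have [k km ek] := dvdp_exp_XsubCP h1.
have sz : (size (mxminpoly N) <= 5)%N.
  rewrite -(size_char_poly N); apply: dvdp_leq; last exact: mxminpoly_dvd_char.
  by rewrite -size_poly_eq0 size_char_poly.
have szk : size (('X - 0%:P) ^+ k : {poly K}) = k.+1 by rewrite size_exp_XsubC.
have k4 : (k <= 4)%N by rewrite -ltnS -szk -(eqp_size ek).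
apply/eqP; rewrite -(horner_mx_X N) -rmorphXn /=; apply/eqP/mxminpoly_minP.
rewrite (eqp_dvdl _ ek) subr0 -(subnKC k4) exprD; exact: dvdp_mulIl.
Qed.

End Expo.

Section GLexp.
Variables (K : finFieldType) (p : nat).
Hypothesis pK : p \in [pchar K].
Hypothesis p_odd : odd p.
Hypothesis p_ge4 : (4 <= p)%N.

Lemma GL_XE (x : {'GL_4[K]}) n : GLval (x ^+ n)%g = (GLval x) ^+ n.
Proof.
elim: n => [|n IH]; first by rewrite expg0 expr0.
by rewrite expgS GL_ME IH exprS.
Qed.

Lemma GL_exp_p (x : {'GL_4[K]}) k : (x ^+ (p ^ k))%g = 1%g -> (x ^+ p)%g = 1%g.
Proof.
move=> xk; apply: val_inj => /=.
have e1 : (GLval x - 1) ^+ (p ^ k) = 0.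
  by rewrite (mx_frob pK p_odd) -GL_XE xk GL_1E subrr.
have e4 := nilmx e1.
have e2 : (GLval x - 1) ^+ (p ^ 1) = 0.
  by rewrite expn1 -(subnKC p_ge4) exprD e4 mul0r.
move: e2; rewrite (mx_frob pK p_odd) expn1 -GL_XE => /eqP; rewrite subr_eq0 => /eqP.
by [].
Qed.
End GLexp.

End ExpoM.
Import ExpoM.

Local Open Scope group_scope.


Lemma no_spe (T : finGroupType) p (G M Q : {group T}) :
  prime p -> M \proper G -> (p %| #|M|)%N -> Q \subset G -> p.-group Q ->
  G \subset 'N(Q) -> (forall x, x \in M -> p.-elt x -> x \in Q) ->
  exists2 x, x \in G :\: M & (p %| #|M :&: M :^ x|)%N.
Proof.
move=> pr MG pM QG pQ nQG hM.
have [y My oy] := Cauchy pr pM.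
have yQ : y \in Q by apply: hM => //; rewrite /p_elt oy pnat_id.
have pMQ : (p %| #|M :&: Q|)%N.
  by rewrite -oy; apply: cardSg; rewrite subsetI !cycle_subG My yQ.
have [QM | nQM] := boolP (Q \subset M).
  have [x Gx nMx] : exists2 x, x \in G & x \notin M.
    by apply/subsetPn; rewrite proper_subn.
  exists x; first by rewrite inE nMx.
  apply: dvdn_trans pMQ (cardSg _); rewrite subsetI subsetIl /=.
  have QxQ : Q :^ x = Q by apply/normP; apply: (subsetP nQG).
  by rewrite (subset_trans (subsetIr M Q)) // -{1}QxQ conjSg.
have prP : M :&: Q \proper Q.
  by rewrite properEneq subsetIr andbT; apply: contraNneq nQM => <-; rewrite subsetIl.
have := nilpotent_proper_norm (pgroup_nil pQ) prP.
case/properP=> _ [x Nx nPx].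
have xQ : x \in Q by move: Nx; rewrite inE => /andP[].
have xN : x \in 'N(M :&: Q) by move: Nx; rewrite inE => /andP[].
exists x.
  rewrite inE (subsetP QG) // andbT.
  by apply: contra nPx => Mx; rewrite inE Mx.
apply: dvdn_trans pMQ (cardSg _); rewrite subsetI subsetIl /=.
have PxP : (M :&: Q) :^ x = M :&: Q by apply/normP.
by rewrite -{1}PxP conjSg subsetIl.
Qed.



Section Chain.
Variables (gT : finGroupType) (p : nat) (H : {group gT}).
Hypotheses (pr : prime p) (pH : p.-group H).

Lemma aut_mul (a : {perm gT}) x y : a \in Aut H -> x \in H -> y \in H ->
  a (x * y) = a x * a y.
Proof. by move=> aA; apply: (morphicP (Aut_morphic aA)). Qed.

Lemma aut_exp (a : {perm gT}) x n : a \in Aut H -> x \in H -> a (x ^+ n) = a x ^+ n.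
Proof.
move=> aA xH; elim: n => [|n IH]; first by rewrite !expg0 -(autmE aA) morph1.
by rewrite !expgS aut_mul ?groupX // IH.
Qed.

Lemma stepA (b : {perm gT}) (N L : {group gT}) :
  b \in Aut H -> N \subset H -> L \subset H -> p^'.-elt b ->
  {in N, forall x, b x = x} -> (forall x, x \in L -> x^-1 * b x \in N) ->
  {in L, forall x, b x = x}.
Proof.
move=> bA NH LH pb fixN hL x xL.
set c := x^-1 * b x.
have cN : c \in N := hL x xL.
have bx : b x = x * c by rewrite /c mulKVg.
have iter_b j : (b ^+ j)%g x = x * c ^+ j.
  elim: j => [|j IH]; first by rewrite expg0 perm1 mulg1.
  have xH : x \in H := subsetP LH x xL.
  have cjH : c ^+ j \in H by rewrite groupX // (subsetP NH).
  rewrite expgSr permM IH aut_mul // (fixN (c ^+ j)) ?groupX //.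
  by rewrite bx -mulgA -expgS.
have := iter_b #[b]; rewrite expg_order perm1 => /esym.
rewrite -{2}[x]mulg1 => /mulgI/eqP; rewrite -order_dvdn => cb.
have pc : p.-elt c := mem_p_elt pH (subsetP NH _ cN).
have pc' : p^'.-elt c := pnat_dvd cb pb.
have /eqP := pnat_1 pc pc'; rewrite order_eq1 => /eqP c1.
by rewrite bx c1 mulg1.
Qed.

Lemma fermat_iter k m : k ^ (p ^ m) = k %[mod p].
Proof.
elim: m => [|m IH]; first by rewrite expn0 expn1.
by rewrite expnSr expnM fermat_little.
Qed.

Lemma stepB (a : {perm gT}) (N L : {group gT}) :
  a \in Aut H -> L \subset H -> N <| L -> #|L : N| = p ->
  (forall x, x \in L -> a x \in L) -> (forall x, x \in N -> a x \in N) ->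
  p.-elt a -> forall x, x \in L -> x^-1 * a x \in N.
Proof.
move=> aA LH /andP[NL nNL] iLN aL aN pa x xL.
have [xN | xN] := boolP (x \in N); first by rewrite groupM ?groupV ?aN.
have xNN : x \in 'N(N) := subsetP nNL x xL.
set gx := coset N x.
have gxQ : gx \in L / N by apply: mem_quotient.
have gx1 : gx != 1 by apply: contra xN => /eqP; apply: coset_idr.
have oQ : #|L / N| = p by rewrite card_quotient.
have ogx : #[gx] = p.
  have : (#[gx] %| p)%N by rewrite -oQ order_dvdG.
  case/primeP: pr => _ h /h /orP[]; last by move/eqP.
  by rewrite order_eq1 (negPf gx1).
have cQ : <[gx]> = L / N.
  by apply/eqP; rewrite eqEcard cycle_subG gxQ oQ -ogx leqnn.
have LxL (z : gT) : z \in L -> z \in H := subsetP LH z.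
have axQ : coset N (a x) \in <[gx]> by rewrite cQ mem_quotient ?aL.
case/cycleP: axQ => k axk.
have hy y : y \in L -> coset N (a y) = coset N y ^+ k.
  move=> yL.
  have : coset N y \in <[gx]> by rewrite cQ mem_quotient.
  case/cycleP=> t yt.
  set n := (x ^+ t)^-1 * y.
  have nN : n \in N.
    apply: coset_idr; first by rewrite groupM ?groupV ?groupX ?(subsetP nNL).
    rewrite morphM ?groupV ?groupX ?(subsetP nNL) // morphV ?groupX //.
    by rewrite morphX // -yt mulVg.
  have ey : y = x ^+ t * n by rewrite /n mulKVg.
  have nL : n \in L := subsetP NL n nN.
  rewrite {1}ey aut_mul ?groupX ?LxL // aut_exp ?LxL //.
  rewrite morphM ?groupX ?(subsetP nNL) ?aL ?aN ?groupX //.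
  rewrite morphX ?(subsetP nNL) ?aL //= (coset_id (aN n nN)) mulg1 axk yt.
  by rewrite expgAC.
have iterL j : (a ^+ j)%g x \in L.
  elim: j => [|j IH]; first by rewrite expg0 perm1.
  by rewrite expgSr permM aL.
have iterQ j : coset N ((a ^+ j)%g x) = gx ^+ (k ^ j).
  elim: j => [|j IH]; first by rewrite expg0 perm1 expn0 expg1.
  by rewrite expgSr permM hy // IH -expgM expnSr.
have [m om] := p_natP pa.
have := iterQ #[a]; rewrite expg_order perm1 -/gx om.
rewrite -expg_mod_order ogx fermat_iter -ogx expg_mod_order -axk => gxa.
apply: coset_idr; first by rewrite groupM ?groupV ?(subsetP nNL) ?aL.
by rewrite morphM ?groupV ?(subsetP nNL) ?aL // morphV //= -gxa mulVg.
Qed.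

End Chain.



Section Chain2.
Variables (gT : finGroupType) (p : nat) (H H1 H2 H3 : {group gT}).
Hypotheses (pr : prime p) (pH : p.-group H).
Hypotheses (c1 : H1 \char H) (c2 : H2 \char H) (c3 : H3 \char H).
Hypotheses (s12 : H1 \subset H2) (s23 : H2 \subset H3).
Hypotheses (o1 : #|H1| = p) (i12 : #|H2 : H1| = p) (i23 : #|H3 : H2| = p)
  (i3 : #|H : H3| = p).

Definition stab (N L : {set gT}) (b : {perm gT}) := [forall x in L, x^-1 * b x \in N].
Definition cond b := [&& stab 1 H1 b, stab H1 H2 b, stab H2 H3 b & stab H3 H b].
Definition Bset := [set b in Aut H | cond b].

Lemma char_aut (L : {group gT}) a x : L \char H -> a \in Aut H -> x \in L -> a x \in L.
Proof.
case/andP=> _ /forall_inP h aA xL.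
by apply: (subsetP (h a aA)); apply: imset_f.
Qed.

Lemma stabM (N L : {group gT}) a b : L \char H -> a \in Aut H -> b \in Aut H ->
  stab N L a -> stab N L b -> stab N L (a * b).
Proof.
move=> cL aA bA /forall_inP ha /forall_inP hb; apply/forall_inP => x xL.
have axL := char_aut cL aA xL.
have -> : x^-1 * (a * b)%g x = (x^-1 * a x) * ((a x)^-1 * b (a x)).
  by rewrite permM -mulgA mulKVg.
by rewrite groupM ?ha ?hb.
Qed.

Lemma stab1 (N L : {group gT}) : stab N L 1.
Proof. by apply/forall_inP => x _; rewrite perm1 mulVg group1. Qed.

Lemma c0 : (1%G : {group gT}) \char H.
Proof. exact: char1. Qed.

Lemma Bgroup : group_set Bset.
Proof.
apply/group_setP; split.
  by rewrite inE group1 /cond !stab1.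
move=> a b /setIdP[aA /and4P[a1 a2 a3 a4]] /setIdP[bA /and4P[b1 b2 b3 b4]].
by rewrite inE groupM //= /cond !stabM // ?char_refl.
Qed.

Canonical B_group := Group Bgroup.

Lemma stab_in (N L : {group gT}) b x : stab N L b -> x \in L -> x^-1 * b x \in N.
Proof. by move/forall_inP; apply. Qed.

Lemma Bp' b : b \in Bset -> p^'.-elt b -> b = 1.
Proof.
move=> /setIdP[bA /and4P[b1 b2 b3 b4]] pb.
have sH1 := char_sub c1; have sH2 := char_sub c2; have sH3 := char_sub c3.
have f1 : {in H1, forall x, b x = x}.
  move=> x xH1; have := stab_in b1 xH1; rewrite inE => /eqP.
  by move/(canRL (mulKVg x)); rewrite mulg1.
have f2 := stepA pH bA sH1 sH2 pb f1 (fun x => stab_in b2).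
have f3 := stepA pH bA sH2 sH3 pb f2 (fun x => stab_in b3).
have f4 := stepA pH bA sH3 (subxx H) pb f3 (fun x => stab_in b4).
apply: (eq_Aut bA (group1 _)) => x xH; rewrite perm1; exact: f4.
Qed.

Lemma Bp : p.-group Bset.
Proof.
apply/pgroupP => q qpr qB.
have [b bB ob] := Cauchy qpr qB.
have bB' : b.`_p^' \in Bset.
  by apply: (subsetP _ _ (cycle_constt _ _)); rewrite cycle_subG.
have /constt1P : b.`_p^' = 1 by apply: Bp' bB' (p_elt_constt _ _).
by rewrite p_eltNK /p_elt ob pnatE.
Qed.

Lemma pelt_B a : a \in Aut H -> p.-elt a -> a \in Bset.
Proof.
move=> aA pa; rewrite inE aA /= /cond /stab.
have sH1 := char_sub c1; have sH2 := char_sub c2; have sH3 := char_sub c3.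
have ch (L : {group gT}) : L \char H -> forall x, x \in L -> a x \in L.
  by move=> cL x; apply: char_aut.
have nr (N L : {group gT}) : N \char H -> N \subset L -> L \subset H -> N <| L.
  by move=> cN NL LH; apply: normalS NL LH (char_normal cN).
apply/and4P; split; apply/forall_inP.
- move=> x xH1.
  have := @stepB _ _ H pr a 1%G H1 aA sH1 (normal1 _) _ (ch _ c1) (ch _ c0) pa x xH1.
  by apply; rewrite indexg1.
- have h := stepB pr aA sH2 (nr _ _ c1 s12 sH2) i12 (ch _ c2) (ch _ c1) pa. exact h.
- have h := stepB pr aA sH3 (nr _ _ c2 s23 sH3) i23 (ch _ c3) (ch _ c2) pa. exact h.
- have h := stepB pr aA (subxx H) (nr _ _ c3 sH3 (subxx H)) i3 (ch _ (char_refl H)) (ch _ c3) pa. exact h.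
Qed.

Lemma no_spe_chain (X : {group {perm gT}}) (I : {set {perm gT}})
  (M : {group coset_of I}) : X \subset Aut H -> ~ strongly_p_embedded p (X / I) M.
Proof.
move=> XA [MG pM hM].
pose Q := (X :&: B_group)%G.
have pQ : p.-group Q := pgroupS (subsetIr _ _) Bp.
have nQX : X \subset 'N(Q).
  apply/subsetP=> g gX; rewrite inE; apply/subsetP=> y /imsetP[z zQ ->].
  move: zQ; rewrite inE => /andP[zX zB].
  have yX : z ^ g \in X by rewrite groupJ.
  rewrite inE yX pelt_B ?(subsetP XA) //.
  by rewrite p_eltJ (mem_p_elt Bp).
have sQX : Q / I \subset X / I by apply: morphimS; apply: subsetIl.
have pQI : p.-group (Q / I) by apply: morphim_pgroup.
have nQI : X / I \subset 'N(Q / I) by apply: morphim_norms.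
have hp : forall q, q \in M -> p.-elt q -> q \in Q / I.
  move=> q qM pq.
  case/morphimP: (subsetP (proper_sub MG) q qM) => a aN aX qa.
  rewrite -(constt_p_elt pq) qa.
  have bX : a.`_p \in X by rewrite (subsetP _ _ (cycle_constt _ _)) // cycle_subG.
  have bN : a.`_p \in 'N(I).
    by rewrite (subsetP _ _ (cycle_constt _ _)) // cycle_subG.
  have bQ : a.`_p \in Q by rewrite inE bX pelt_B ?(subsetP XA) // p_elt_constt.
  rewrite -morph_constt //; exact: mem_morphim.
have [x xGM px] := @no_spe _ p (X / I)%G M (Q / I)%G pr MG pM sQX pQI nQI hp.
by move: (hM x xGM); rewrite px.
Qed.

End Chain2.



Section Grp.
Variables (gT : finGroupType) (p : nat) (H : {group gT}).
Hypotheses (pr : prime p) (oH : #|H| = (p ^ 4)%N) (nab : ~~ abelian H)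
  (expH : forall x, x \in H -> x ^+ p = 1).

Lemma pH : p.-group H.
Proof. by rewrite /pgroup oH pnatX pnat_id. Qed.

Lemma ord_p x : x \in H -> x != 1 -> #[x] = p.
Proof.
move=> xH x1; have : (#[x] %| p)%N by rewrite order_dvdn expH.
case/primeP: pr => _ h /h /orP[]; last by move/eqP.
by rewrite order_eq1 (negPf x1).
Qed.

Lemma idx_le (K : {group gT}) x : x \in H -> (forall g, g \in H -> [~ x, g] \in K) ->
  (#|H : 'C_H[x]| <= #|K|)%N.
Proof.
move=> xH hK; rewrite index_cent1 -(card_lcoset _ x^-1); apply: subset_leq_card.
apply/subsetP=> y; rewrite mem_lcoset invgK => /imsetP[g gH e].
have -> : y = [~ x, g] by rewrite commgEl -e mulKg.
exact: hK.
Qed.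

Lemma noncomm : exists2 x, x \in H & exists2 y, y \in H & x * y != y * x.
Proof.
have [x xH xC] : exists2 x, x \in H & x \notin 'C(H).
  by apply/subsetPn; move: nab; rewrite /abelian.
exists x => //; move: xC; rewrite -sub_cent1 => /subsetPn[y yH yC].
by exists y => //; apply: contra yC => /eqP cxy; apply/cent1P; rewrite /commute cxy.
Qed.

Lemma caseE : H^`(1) \subset 'Z(H) -> (p < #|'Z(H)|)%N ->
  exists E C : {group gT},
    [/\ E \x C = H, E \isog [set: gsort p^{1+2}] & #|C| = p].
Proof.
move=> dZ pZ.
have [x xH [y yH nxy]] := noncomm.
set c := [~ x, y].
have cZ : c \in 'Z(H) by apply: (subsetP dZ); rewrite derg1 mem_commg.
have cH : c \in H := subsetP (center_sub H) c cZ.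
have cCH : c \in 'C(H) by move: cZ; rewrite inE => /andP[].
have c1 : c != 1 by apply: contra nxy => /commgP ->.
have x1 : x != 1 by apply: contra nxy => /eqP ->; rewrite mul1g mulg1.
have y1 : y != 1 by apply: contra nxy => /eqP ->; rewrite mul1g mulg1.
have xZ : x \notin 'Z(H).
  apply: contra nxy => /setIP[_ /centP xC]; apply/eqP; exact: (xC y yH).
have ox := ord_p xH x1; have oy := ord_p yH y1; have oc := ord_p cH c1.
have cxC : c \in 'C[x] by apply/cent1P; apply: (centP cCH x xH).
pose W := (<[x]> <*> <[c]>)%G.
have eW : W :=: <[x]> * <[c]>.
  by apply: cent_joinEr; rewrite cycle_subG /= cent_cycle.
have tiW : <[x]> :&: <[c]> = 1.
  apply: prime_TIg; first by rewrite -orderE ox.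
  rewrite cycle_subG; apply: contra xZ => xc.
  by rewrite (subsetP _ _ xc) // cycle_subG.
have oW : #|W| = (p ^ 2)%N by rewrite eW TI_cardMg // -!orderE ox oc.
have xW : x \in W by rewrite (subsetP (joing_subl _ _)) ?cycle_id.
have cW : c \in W by rewrite (subsetP (joing_subr _ _)) ?cycle_id.
have yN : y \in 'N(W).
  rewrite inE /= conjYg -!cycleJ join_subG !cycle_subG.
  rewrite conjg_mulR groupM //=.
  have -> : c ^ y = c by apply/conjg_fixP/commgP; apply: (centP cCH y yH).
  by [].
pose E := (W <*> <[y]>)%G.
have eE : E :=: W * <[y]> by apply: norm_joinEr; rewrite cycle_subG.
have WC : W \subset 'C[x] by rewrite join_subG !cycle_subG cent1id.
have tiE : W :&: <[y]> = 1.
  rewrite setIC; apply: prime_TIg; first by rewrite -orderE oy.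
  rewrite cycle_subG; apply: contra nxy => /(subsetP WC)/cent1P ->.
  by [].
have oE : #|E| = (p ^ 3)%N by rewrite eE TI_cardMg // oW -orderE oy -expnSr.
have EH : E \subset H by rewrite !join_subG !cycle_subG xH cH yH.
have xE : x \in E by rewrite (subsetP (joing_subl _ _)).
have yE : y \in E by rewrite (subsetP (joing_subr _ _)) ?cycle_id.
have nabE : ~~ abelian E.
  by apply/negP => /centsP cE; move: nxy; rewrite (cE x xE y yE) eqxx.
have pE : p.-group E := pgroupS EH pH.
have esE : extraspecial E.
  by apply: p3group_extraspecial pE nabE _; rewrite oE pfactorK.
have expE : (exponent E %| p)%N.
  by apply/exponentP => g gE; apply: expH (subsetP EH g gE).
have isoE := isog_pX1p2 pr esE expE oE.
have oZE := card_center_extraspecial pE esE.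
have [z zZ zE] : exists2 z, z \in 'Z(H) & z \notin E.
  apply/subsetPn; apply/negP => ZE.
  have : 'Z(H) \subset 'Z(E).
    rewrite subsetI ZE /=; apply: subset_trans (centS EH).
    by apply/subsetP => w; rewrite inE => /andP[].
  by move/subset_leq_card; rewrite oZE leqNgt pZ.
have zH : z \in H := subsetP (center_sub H) z zZ.
have z1 : z != 1 by apply: contra zE => /eqP ->; rewrite group1.
have oz := ord_p zH z1.
exists E, <[z]>%G; split => //.
have tiEC : E :&: <[z]> = 1.
  rewrite setIC; apply: prime_TIg; first by rewrite -orderE oz.
  by rewrite cycle_subG.
have cEC : <[z]> \subset 'C(E).
  rewrite cycle_subG; apply: (subsetP (centS EH)).
  by move: zZ; rewrite inE => /andP[].
rewrite dprodE //; apply/eqP; rewrite eqEcard mulG_subG EH cycle_subG zH /=.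
by rewrite TI_cardMg // oE -orderE oz oH -expnSr.
Qed.

Lemma p_gt1 : (1 < p)%N. Proof. exact: prime_gt1. Qed.

Lemma pexp (K : {group gT}) : K \subset H -> {k | (k <= 4)%N & #|K| = (p ^ k)%N}.
Proof.
move=> KH; exists (logn p #|K|); last exact: card_pgroup (pgroupS KH pH).
by rewrite -(dvdn_Pexp2l _ _ p_gt1) -card_pgroup ?(pgroupS KH pH) // -oH cardSg.
Qed.

Lemma cent_p3 x : x \in H -> x \notin 'Z(H) ->
  (#|H : 'C_H[x]| <= p)%N -> #|'C_H[x]| = (p ^ 3)%N.
Proof.
move=> xH xZ ile.
have AH : 'C_H[x] \subset H := subsetIl _ _.
have [a a4 oA] := pexp AH.
have := Lagrange AH; rewrite oA oH => eL.
have a3 : (3 <= a)%N.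
  have : (p ^ 4 <= p ^ a * p)%N by rewrite -eL leq_mul2l ile orbT.
  by rewrite -expnSr leq_exp2l ?p_gt1.
have a4' : a != 4.
  apply: contra xZ => /eqP a4e.
  have eA : 'C_H[x] = H.
    by apply/eqP; rewrite eqEcard AH /= -[#|'C_H[x]|]/(#|'C_H[x]%G|) oA oH a4e /=.
  rewrite inE xH /=; rewrite -sub_cent1; apply/subsetP => y yH.
  by move: yH; rewrite -{1}eA => /setIP[].
by congr (_ ^ _)%N; apply/eqP; rewrite eqn_leq a3 andbT -ltnS ltn_neqAle a4' a4.
Qed.

Lemma cent_abelian x : x \in H -> x \notin 'Z(H) -> #|'Z(H)| = p ->
  #|'C_H[x]| = (p ^ 3)%N -> abelian 'C_H[x].
Proof.
move=> xH xZ oZ oA; have [//|nab'] := boolP (abelian 'C_H[x]); exfalso.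
have AH : 'C_H[x] \subset H := subsetIl _ _.
have esA : extraspecial 'C_H[x].
  by apply: p3group_extraspecial (pgroupS AH pH) nab' _; rewrite oA pfactorK.
have oZA := card_center_extraspecial (pgroupS AH pH) esA.
have ZZA : 'Z(H) \subset 'Z('C_H[x]).
  rewrite subsetI; apply/andP; split.
    have ZC : 'Z(H) \subset 'C(H) by apply/subsetP => w; rewrite inE => /andP[].
    rewrite subsetI center_sub /= sub_cent1.
    by apply: (subsetP _ x xH); rewrite centsC.
  apply: subset_trans (centS AH).
  by apply/subsetP => w; rewrite inE => /andP[].
have xZA : x \in 'Z('C_H[x]).
  rewrite inE inE xH cent1id /=; apply/centP => w /setIP[_ /cent1P]; done.
have : 'Z(H) \proper 'Z('C_H[x]).
  by apply/properP; split => //; exists x.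
by move/proper_card; rewrite oZ oZA ltnn.
Qed.

Lemma not_class2 : #|'Z(H)| = p -> ~~ (H^`(1) \subset 'Z(H)).
Proof.
move=> oZ; apply/negP => dZ.
have [x xH [y yH nxy]] := noncomm.
have nZ u : u \in H -> (exists2 v, v \in H & u * v != v * u) -> u \notin 'Z(H).
  move=> uH [v vH nuv]; apply: contra nuv => /setIP[_ /centP uC].
  by apply/eqP; apply: uC.
have xZ : x \notin 'Z(H) by apply: nZ => //; exists y.
have yZ : y \notin 'Z(H).
  apply: nZ => //; exists x => //; by rewrite eq_sym.
have ile u : u \in H -> (#|H : 'C_H[u]| <= p)%N.
  by move=> uH; rewrite -oZ; apply: idx_le => // g gH; apply: (subsetP dZ); rewrite derg1 mem_commg.
pose A := ('C_H[x])%G; pose B := ('C_H[y])%G.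
have oA : #|A| = (p ^ 3)%N := cent_p3 xH xZ (ile x xH).
have oB : #|B| = (p ^ 3)%N := cent_p3 yH yZ (ile y yH).
have aA : abelian A := cent_abelian xH xZ oZ oA.
have aB : abelian B := cent_abelian yH yZ oZ oB.
have AH : A \subset H := subsetIl _ _.
have BH : B \subset H := subsetIl _ _.
have xA : x \in A by rewrite inE xH cent1id.
have xB : x \notin B.
  rewrite inE xH /=; apply: contra nxy => /cent1P cxy; apply/eqP; exact: cxy.
have ABH : (A :&: B)%G \subset H by rewrite subIset ?AH.
have [k k4 oAB] := pexp ABH.
have k2 : (k <= 2)%N.
  have : (A :&: B)%G \proper A.
    by apply/properP; split; [exact: subsetIl | exists x => //; rewrite inE (negPf xB) andbF].
  move/proper_card; rewrite oAB oA ltn_exp2l ?p_gt1 //.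
have : (#|(A * B)%g| <= p ^ 4)%N by rewrite -oH subset_leq_card // mulG_subG AH BH.
move=> leAB.
have := mul_cardG A B; rewrite oA oB -expnD => e.
have oI : #|A :&: B| = (p ^ k)%N := oAB.
rewrite oI in e.
have k2' : (2 <= k)%N.
  have : (p ^ (3 + 3) <= p ^ (4 + k))%N by rewrite e expnD leq_mul2r leAB orbT.
  by rewrite leq_exp2l ?p_gt1 // -(leq_add2l 4).
have ek : k = 2 by apply/eqP; rewrite eqn_leq k2 k2'.
have oAB4 : #|(A * B)%g| = (p ^ 4)%N.
  move: e; rewrite ek (_ : (3 + 3 = 4 + 2)%N) // expnD => /eqP; rewrite eqn_mul2r expn_eq0.
  by case/orP => [/andP[/eqP p0] | /eqP] //; move: p_gt1; rewrite p0.
have eH : (A * B)%g = H.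
  by apply/eqP; rewrite eqEcard mulG_subG AH BH oAB4 oH /=.
have IC : A :&: B \subset 'C((A * B)%g).
  rewrite centM subsetI; apply/andP; split.
    by apply: subset_trans (subsetIl _ _) _.
  by apply: subset_trans (subsetIr _ _) _.
rewrite eH in IC.
have IZ : A :&: B \subset 'Z(H) by rewrite subsetI IC subIset ?AH.
by move/subset_leq_card: IZ; rewrite oI ek oZ leqNgt -{1}(expn1 p) ltn_exp2l ?p_gt1.
Qed.

Lemma caseChain : #|'Z(H)| = p ->
  exists H1 H2 H3 : {group gT},
    [/\ [/\ H1 \char H, H2 \char H & H3 \char H], H1 \subset H2, H2 \subset H3 &
     [/\ #|H1| = p, #|H2 : H1| = p, #|H3 : H2| = p & #|H : H3| = p]].
Proof.
move=> oZ.
have nc2 := not_class2 oZ.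
have nZH : H \subset 'N('Z(H)) by case/andP: (center_normal H).
have nabQ : ~~ abelian (H / 'Z(H)).
  by apply: contra nc2; apply: der1_min.
have ZH : 'Z(H) \subset H := center_sub H.
have iZ : #|H : 'Z(H)| = (p ^ 3)%N.
  have := Lagrange ZH; rewrite oZ oH (_ : 4 = 1 + 3)%N // expnD expn1.
  by move/eqP; rewrite eqn_mul2l gtn_eqF ?prime_gt0 // => /eqP.
have oQ : #|H / 'Z(H)| = (p ^ 3)%N by rewrite card_quotient.
have pQ : p.-group (H / 'Z(H)) := quotient_pgroup _ pH.
have esQ : extraspecial (H / 'Z(H)).
  by apply: p3group_extraspecial pQ nabQ _; rewrite oQ pfactorK.
have oZQ := card_center_extraspecial pQ esQ.
pose Z2 := 'Z_2(H)%G.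
have Z1 : 'Z_1(H) = 'Z(H) := ucn1 H.
have ZZ2 : 'Z(H) \subset Z2 by rewrite -Z1; exact: ucn_subS.
have Z2H : Z2 \subset H := ucn_sub 2 H.
have iZ2 : #|Z2 : 'Z(H)| = p.
  rewrite -card_quotient; last exact: subset_trans Z2H nZH.
  by have := ucn_central 1 H; rewrite Z1 => ->.
have oZ2 : #|Z2| = (p ^ 2)%N.
  by rewrite -(Lagrange ZZ2) oZ iZ2 expnS expn1.
have [z0 z0Z2 z0Z] : exists2 z0, z0 \in Z2 & z0 \notin 'Z(H).
  apply/subsetPn; apply/negP => /subset_leq_card; rewrite oZ2 oZ.
  by rewrite -{2}(expn1 p) leq_exp2l ?p_gt1.
have z0H : z0 \in H := subsetP Z2H z0 z0Z2.
have z01 : z0 != 1 by apply: contra z0Z => /eqP ->; rewrite group1.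
have oz0 := ord_p z0H z01.
have ile : (#|H : 'C_H[z0]| <= p)%N.
  rewrite -oZ; apply: idx_le => // g gH; rewrite /= -Z1.
  by apply: (subsetP (ucn_comm 1 H)); rewrite mem_commg.
have oC := cent_p3 z0H z0Z ile.
have ti : <[z0]> :&: 'Z(H) = 1.
  apply: prime_TIg; first by rewrite -orderE oz0.
  by rewrite cycle_subG.
have eZ2 : (<[z0]> * 'Z(H))%g = Z2.
  apply/eqP; rewrite eqEcard mulG_subG cycle_subG z0Z2 ZZ2 /=.
  by rewrite TI_cardMg // -orderE oz0 oZ oZ2.
pose M := 'C_H(Z2)%G.
have MH : M \subset H := subsetIl _ _.
have ZC : 'Z(H) \subset 'C(H) by apply/subsetP => w; rewrite inE => /andP[].
have CM : 'C_H[z0] \subset M.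
  rewrite /M /= -eZ2 centM cent_cycle setIA subsetI subxx /=.
  by apply: subset_trans (subsetIl _ _) _; rewrite centsC.
have [m m4 oM] := pexp MH.
have m3 : (3 <= m)%N.
  by rewrite -(leq_exp2l _ _ p_gt1) -oM -oC subset_leq_card.
have m4' : m != 4.
  apply/eqP => em.
  have eM : M :=: H by apply/eqP; rewrite eqEcard MH oM oH em /=.
  have : Z2 \subset 'Z(H).
    rewrite subsetI Z2H /= centsC -{1}eM; exact: subsetIr.
  by move/subset_leq_card; rewrite oZ2 oZ -{2}(expn1 p) leq_exp2l ?p_gt1.
have em : m = 3 by apply/eqP; rewrite eqn_leq m3 andbT -ltnS ltn_neqAle m4' m4.
have aZ2 : abelian Z2.
  by apply: p2group_abelian (pgroupS Z2H pH) _; rewrite oZ2 pfactorK.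
have Z2M : Z2 \subset M by rewrite subsetI Z2H.
exists ('Z(H))%G, Z2, M; split => //.
- split; [exact: center_char | exact: ucn_char | ].
  by apply: subcent_char; [exact: char_refl | exact: ucn_char].
split => //.
- by rewrite -divgS // oM oZ2 em (expnS p 2) mulnK // expn_gt0 prime_gt0.
- by rewrite -divgS // oM oH em (expnS p 3) mulnK // expn_gt0 prime_gt0.
Qed.

Lemma classify :
  (exists E C : {group gT}, [/\ E \x C = H, E \isog [set: gsort p^{1+2}] & #|C| = p])
  \/ (exists H1 H2 H3 : {group gT},
    [/\ [/\ H1 \char H, H2 \char H & H3 \char H], H1 \subset H2, H2 \subset H3 &
     [/\ #|H1| = p, #|H2 : H1| = p, #|H3 : H2| = p & #|H : H3| = p]]).
Proof.
have ZH : 'Z(H) \subset H := center_sub H.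
have [k k4 oZ] := pexp ZH.
have k0 : k != 0%N.
  apply/eqP => k0.
  have : 'Z(H) == 1 by rewrite trivg_card1 oZ k0 expn0.
  rewrite center_nil_eq1 ?(pgroup_nil pH) // => /eqP H1.
  by move: oH; rewrite H1 cards1 => /esym/eqP; rewrite -(expn0 p) eqn_exp2l ?p_gt1.
have [k1 | k2] := eqVneq k 1%N.
  by right; apply: caseChain; rewrite oZ k1 expn1.
left; apply: caseE.
  have nZH : H \subset 'N('Z(H)) by case/andP: (center_normal H).
  apply: der1_min => //.
  have pQ : p.-group (H / 'Z(H)) := quotient_pgroup _ pH.
  apply: (p2group_abelian pQ).
  have := card_pgroup pQ; rewrite card_quotient // => oQ.
  have := Lagrange ZH; rewrite oZ oQ oH -expnD => /eqP; rewrite eqn_exp2l ?p_gt1 //.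
  move=> /eqP e; rewrite pfactorK //; move: k0 k2 e; clear; lia.
move: oZ => /= ->; rewrite -{1}(expn1 p) ltn_exp2l ?p_gt1 //; move: k0 k2; clear; lia.
Qed.


End Grp.


Theorem lemma4p2 (p : nat) (K : finFieldType) (S : {group {'GL_4[K]}})
  (F : {set {'GL_4[K]}} -> {set {'GL_4[K]}} -> {set {ffun {'GL_4[K]} -> {'GL_4[K]}}})
  (H : {group {'GL_4[K]}}) :
  prime p -> 5 <= p -> #|K| = (p ^ 2)%N ->
  S \in 'Syl_p(SU 3 p K) ->
  saturated S F p ->
  H \subset S -> ~~ abelian H -> #|H| = (p ^ 4)%N ->
  Fessential p S F H ->
  exists E C : {group {'GL_4[K]}},
    [/\ E \x C = H, E \isog [set: gsort p^{1+2}] & #|C| = p].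
Proof.
move=> pr p5 cK sylS sat HS nabH oH ess.
have pK := card_finPcharP cK pr.
have podd : odd p.
  by case: (even_prime pr) => // p2; move: p5; rewrite p2.
have p4 : 4 <= p by apply: ltnW.
have expH : forall x, x \in H -> x ^+ p = 1.
  move=> x xH; apply: (GL_exp_p pK podd p4 (k := 4)); apply/eqP.
  by rewrite -order_dvdn -oH order_dvdG.
case: (classify pr oH nabH expH) => [//|[H1 [H2 [H3 [[c1 c2 c3] s12 s23 [o1 i12 i23 i3]]]]]].
exfalso; case: ess => _ _ [M spe].
have fs : fusion_system S F := sat.1.
have gA : group_set (AutF F H).
  apply/group_setP; split.
    rewrite inE group1 /=.
    have hc : H :^ (1 : {'GL_4[K]}) \subset H by rewrite conjsg1.
    have h1 := fs_conj fs (groupP H) (groupP H) HS HS (group1 S) hc.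
    by apply: (fs_ext fs h1) => x _; rewrite !ffunE perm1 conjg1.
  move=> a b /setIdP[aA fa] /setIdP[bA fb]; rewrite inE groupM //=.
  have -> : [ffun x => (a * b)%g x] = [ffun x => [ffun x => b x] ([ffun x => a x] x)].
    by apply/ffunP => x; rewrite !ffunE permM.
  by have := fs_comp fs fa fb; apply.
have XA : Group gA \subset Aut H by apply/subsetP => a; rewrite inE => /andP[].
have := @no_spe_chain _ p H H1 H2 H3 pr (pH pr oH) c1 c2 c3 s12 s23 o1 i12 i23 i3 (Group gA) (Inn H) M XA.
by apply.
Qed.
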